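(* Let $(M,J)$ be an almost complex manifold and $\nabla$ a connection on $M$. Then: (1) in local coordinates $(x_1,\dots,x_n,p_1,\dots,p_n)$ on $T^*M$, with respect to the basis $(\partial_{x},\partial_p)$, $J^{G,\nabla}$ has block matrix with upper-left block $(J^i_j)$, upper-right block $0$, lower-left block with entries $\Gamma_{l,i}J^l_j-\Gamma_{j,l}J^l_i$, and lower-right block $(J^j_i)$ (i.e. the transpose of $J$); (2) $J^{G,\nabla}=J^c+\gamma(S)$, where $S(X,Y)=-(\nabla J)(X,Y)+(\nabla J)(Y,X)+T(JX,Y)-JT(X,Y)$ and $T$ is the torsion of $\nabla$.
   Context: $J=J^k_ldx^l\otimes\partial_{x_k}$ with $J^2=-\mathrm{Id}$; Einstein summation. Christoffel symbols: $\nabla_{\partial_{x_i}}\partial_{x_j}=\Gamma^k_{i,j}\partial_{x_k}$, and $\Gamma_{i,j}:=p_k\Gamma^k_{i,j}$. Torsion $T(X,Y)=\nabla_XY-\nabla_YX-[X,Y]$; $(\nabla J)(X,Y)=\nabla_X(JY)-J\nabla_XY$. The induced connection on $T^*M$ is $(\nabla_Xs)(Y)=X(s(Y))-s(\nabla_XY)$; $H^\nabla_\xi=\{d_xs(X): X\in T_xM,\ s(x)=\xi,\ \nabla_Xs=0\}$, $T_\xi T^*M=H^\nabla_\xi\oplus T^*_xM$, $v^\nabla$ the projection onto $T^*_xM$ along $H^\nabla_\xi$. The generalized horizontal lift is $J^{G,\nabla}(X,v^\nabla(Y))=(JX,{}^tJ(v^\nabla(Y)))$ with $JX:=(d_\xi\pi|_{H^\nabla_\xi})^{-1}(J(x)d_\xi\pi(X))$.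 For $R=R^k_{ij}dx^i\otimes dx^j\otimes\partial_{x_k}$, $\gamma(R):=p_kR^k_{ij}dx^i\otimes\partial_{p_j}$. The complete lift $J^c$ is defined by $d(\theta(J))=\omega_{st}(J^c\cdot,\cdot)$ with $\theta(J)=p_kJ^k_ldx^l$, $\omega_{st}=d(p_idx^i)$; locally its block matrix has upper-left $J^i_j$, upper-right $0$, lower-left $p_k(\partial_{x_j}J^k_i-\partial_{x_i}J^k_j)$, lower-right $J^j_i$. *)

(* Defs.v *)
(* Local-chart formalization:
   M is replaced by an open coordinate domain U of R^n (points: 'rV[R]_n),
   T^*U = U x R^n with coordinates (x, p); tangent vectors to T^*M at (x,p)
   are pairs (a, b) of components along (d_x, d_p). *)
From HB Require Import structures.
From mathcomp Require Import all_boot all_order all_algebra.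
From mathcomp Require Import all_classical all_reals all_analysis.
Set Implicit Arguments. Unset Strict Implicit. Unset Printing Implicit Defensive.
Import Order.TTheory GRing.Theory Num.Theory.
Import numFieldNormedType.Exports.
Local Open Scope ring_scope.

Section GenLift.
Variables (R : realType) (n : nat).
Notation vec := 'rV[R]_n.

(* A (1,1)-tensor field J = J^k_l dx^l (x) d_{x_k}:  J x k l = J^k_l(x).
   Christoffel symbols: Gam x k i j = Gamma^k_{i,j}(x). *)

Definition Jv (A : 'M[R]_n) (X : vec) : vec := \row_i \sum_j A i j * X 0 j.

(* Gamma_{i,j} := p_k Gamma^k_{i,j} *)
Definition Gp (Gam : vec -> 'I_n -> 'I_n -> 'I_n -> R) (x p : vec) (i j : 'I_n) : R :=
  \sum_k p 0 k * Gam x k i j.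

Definition covvec (Gam : vec -> 'I_n -> 'I_n -> 'I_n -> R)
  (Y : vec -> vec) (x X : vec) : vec :=
  \row_k (derive Y x X 0 k + \sum_i \sum_j Gam x k i j * X 0 i * Y x 0 j).

(* induced connection on 1-forms (covector fields s, s y 0 j = s_j(y)):
   (nabla_X s)(d_{x_j}) = X(s_j) - s(nabla_X d_{x_j}) *)
Definition covform (Gam : vec -> 'I_n -> 'I_n -> 'I_n -> R)
  (s : vec -> vec) (x X : vec) : vec :=
  \row_j (derive s x X 0 j - \sum_k s x 0 k * \sum_i X 0 i * Gam x k i j).

Definition lieb (X Y : vec -> vec) (x : vec) : vec :=
  derive Y x (X x) - derive X x (Y x).

(* torsion at x, vector fields extended as constant (coordinate) fields;
   T(X,Y) = nabla_X Y - nabla_Y X - [X,Y] *)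
Definition torsion Gam (x X Y : vec) : vec :=
  covvec Gam (fun=> Y) x X - covvec Gam (fun=> X) x Y - lieb (fun=> X) (fun=> Y) x.

Definition nablaJ Gam (J : vec -> 'M[R]_n) (x X Y : vec) : vec :=
  covvec Gam (fun y => Jv (J y) Y) x X - Jv (J x) (covvec Gam (fun=> Y) x X).

Definition Stens Gam J (x X Y : vec) : vec :=
  - nablaJ Gam J x X Y + nablaJ Gam J x Y X
  + torsion Gam x (Jv (J x) X) Y - Jv (J x) (torsion Gam x X Y).

Definition ev (i : 'I_n) : vec := \row_j (i == j)%:R.

(* gamma(S) = p_k S^k_{ij} dx^i (x) d_{p_j}, acting on a tangent vector (a,b) *)
Definition gammaS Gam J (x p : vec) (V : vec * vec) : vec * vec :=
  (0, \row_j \sum_i \sum_k p 0 k * Stens Gam J x (ev i) (ev j) 0 k * V.1 0 i).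

(* horizontal subspace H^nabla_(x,p) :
   { d_x s (X) : s(x) = p, (nabla_X s)(x) = 0 },  d_x s(X) = (X, D s(x) X) *)
Definition horiz Gam (x p : vec) (V : vec * vec) : Prop :=
  exists s : vec -> vec, differentiable s x /\ s x = p /\
    covform Gam s x V.1 = 0 /\ V.2 = derive s x V.1.

(* graph of J^{G,nabla} at (x,p): a tangent vector V decomposes as
   V = h + (0,c) with h horizontal (c = v^nabla(V));
   J^{G,nabla} V = (horizontal lift of J (dpi h)) + (0, tJ c),
   with (tJ c)_j = c_l J^l_j. *)
Definition JG_rel Gam (J : vec -> 'M[R]_n) (x p : vec) (V W : vec * vec) : Prop :=
  exists (h : vec * vec) (c : vec), horiz Gam x p h /\ V = (h.1, h.2 + c) /\
    exists h' : vec * vec, horiz Gam x p h' /\ h'.1 = Jv (J x) h.1 /\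
      W = (h'.1, h'.2 + c *m J x).

Definition JG_matrix Gam (J : vec -> 'M[R]_n) (x p : vec) (V : vec * vec) : vec * vec :=
  (Jv (J x) V.1,
   \row_i (\sum_j (\sum_l (Gp Gam x p l i * J x l j - Gp Gam x p j l * J x l i)) * V.1 0 j
           + \sum_j J x j i * V.2 0 j)).

(* 1-forms on T^*U: alpha y q = (dx-components, dp-components) *)
Definition evform (alpha : vec -> vec -> vec * vec) (y q : vec) (V : vec * vec) : R :=
  \sum_i (alpha y q).1 0 i * V.1 0 i + \sum_i (alpha y q).2 0 i * V.2 0 i.

Definition dirder (f : vec -> vec -> R) (x p : vec) (V : vec * vec) : R :=
  derive (fun t : R => f (x + t *: V.1) (p + t *: V.2)) 0 1.

(* exterior derivative on constant coordinate fields: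
   d alpha (V,W) = V(alpha(W)) - W(alpha(V)) - alpha([V,W]), [V,W] = 0 *)
Definition dform alpha (x p : vec) (V W : vec * vec) : R :=
  dirder (fun y q => evform alpha y q W) x p V - dirder (fun y q => evform alpha y q V) x p W.

Definition thetaJ (J : vec -> 'M[R]_n) (y q : vec) : vec * vec := (q *m J y, 0).
(* Liouville form p_i dx^i ; omega_st = d(p_i dx^i) *)
Definition liouville (y q : vec) : vec * vec := (q, 0).

Definition is_complete_lift (J : vec -> 'M[R]_n) (x p : vec) (Jc : vec * vec -> vec * vec) : Prop :=
  forall V W, dform (thetaJ J) x p V W = dform liouville x p (Jc V) W.

End GenLift.

(* Main.v *)
Require Import Defs.
From HB Require Import structures.
From mathcomp Require Import all_boot all_order all_algebra.
From mathcomp Require Import all_classical all_reals all_analysis.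
From mathcomp Require Import ring lra.
Import Order.TTheory GRing.Theory Num.Theory.
Import numFieldNormedType.Exports.
Local Open Scope ring_scope.
Local Open Scope classical_set_scope.

Section Aux.
Variable R : realType.

Lemma derive_ncst (V W : normedModType R) (f : V -> W) x v L :
  (forall h : R, h != 0 -> h^-1 *: (f (h *: v + x) - f x) = L) ->
  derive f x v = L /\ derivable f x v.
Proof.
move=> H; split.
  apply: lim_near_cst => //; near=> h; rewrite /= H //; near: h.
  exact: nbhs_dnbhs_neq.
apply: (is_cvg_near_cst L); near=> h; rewrite /= H //; near: h.
exact: nbhs_dnbhs_neq.
Unshelve. all: by end_near. Qed.

Lemma line_derive (V W : normedModType R) (f : V -> W) x v :
  derive (fun t : R => f (x + t *: v)) 0 1 = derive f x v /\
  (derivable f x v -> derivable (fun t : R => f (x + t *: v)) 0 1).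
Proof.
have E : (fun h : R => h^-1 *: (((fun t : R => f (x + t *: v)) \o shift 0) (h *: 1)
            - (fun t : R => f (x + t *: v)) 0)) =
         (fun h : R => h^-1 *: ((f \o shift x) (h *: v) - f x)).
  rewrite funeqE => h /=.
  by rewrite scale0r !addr0 -[h%:A]/(h * 1) mulr1 [x + _]addrC.
split; [by rewrite /derive E|by rewrite /derivable E].
Qed.

Lemma prod_derive (g : R -> R) (a b c : R) : derivable g 0 1 ->
  derive (fun t : R => (a + t * b) * g t * c) 0 1 = (b * g 0 + a * derive g 0 1) * c /\
  derivable (fun t : R => (a + t * b) * g t * c) 0 1.
Proof.
move=> dg.
have [Dl dl] : derive (fun t : R => a + t * b) 0 1 = b /\ derivable (fun t : R => a + t * b) 0 1.
  apply: derive_ncst => h h0 /=.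
  rewrite -[h%:A]/(h*1) -[h^-1 *: _]/(h^-1 * _); by field.
have -> : (fun t : R => (a + t * b) * g t * c) = c \*o ((fun t : R => a + t * b) * g).
  by rewrite funeqE => t /=; rewrite mulrC.
split.
  rewrite deriveMl; last exact: derivableM.
  rewrite deriveM // Dl /= mul0r addr0 /GRing.scale /=; ring.
apply: derivableM; first exact: derivable_cst.
exact: derivableM.
Qed.


Lemma sum_lin_derive (V : normedModType R) n (F : 'I_n -> V -> R) (c : 'I_n -> R) x v :
  (forall l, derivable (F l) x v) ->
  derive (fun y => \sum_l F l y * c l) x v = \sum_l derive (F l) x v * c l /\
  derivable (fun y => \sum_l F l y * c l) x v.
Proof.
move=> dF.
have -> : (fun y => \sum_l F l y * c l) = \sum_l (c l \o* F l).
  by rewrite fct_sumE.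
have dl : forall l, derivable (c l \o* F l) x v.
  by move=> l; apply: derivableM => //; exact: derivable_cst.
split; last exact: derivable_sum.
rewrite derive_sum //; apply: eq_bigr => l _.
by rewrite deriveMr // mulrC.
Qed.

Lemma derive_lin n (f : 'rV[R]_n -> R) x (V : 'rV[R]_n) :
  differentiable f x ->
  derive f x V = \sum_i V 0 i * derive f x (ev R i).
Proof.
move=> df.
have eV : V = \sum_i V 0 i *: (ev R i : 'rV[R]_n).
  apply/rowP => j; rewrite summxE (bigD1 j) //= !mxE eqxx mulr1 big1 ?addr0 //.
  by move=> i /negbTE ij; rewrite !mxE ij mulr0.
rewrite {1}eV deriveE // linear_sum; apply: eq_bigr => i _.
by rewrite linearZ /= deriveE.
Qed.

Lemma Jv_derive n (J : 'rV[R]_n -> 'M[R]_n) x X (Y : 'rV[R]_n) :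
  (forall k l, differentiable (fun y => J y k l) x) ->
  derive (fun y => Jv (J y) Y) x X =
  \row_k \sum_l derive (fun y => J y k l) x X * Y 0 l.
Proof.
move=> dJ.
have E : forall i j, (fun y => Jv (J y) Y i j) =
   (fun y => \sum_l (fun l y => J y j l) l y * Y 0 l).
  by move=> i j; rewrite funeqE => y; rewrite !mxE.
have dd : forall j l, derivable (fun y => J y j l) x X.
  by move=> j l; apply: diff_derivable.
rewrite derive_mx; last first.
  apply/derivable_mxP => i j; rewrite E.
  exact: (@sum_lin_derive _ _ (fun l y => J y j l) (fun l => Y 0 l) x X (dd j)).2.
apply/rowP => k; rewrite !mxE E.
exact: (@sum_lin_derive _ _ (fun l y => J y k l) (fun l => Y 0 l) x X (dd k)).1.
Qed.

Lemma dcst n (Y : 'rV[R]_n) (x X : 'rV[R]_n) : derive (fun=> Y) x X = 0.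
Proof. exact: derive_cst. Qed.


Definition Hm {n} Gam (x p X : 'rV[R]_n) : 'rV[R]_n :=
  \row_j \sum_i X 0 i * Gp Gam x p i j.

Lemma horizP n Gam (x p : 'rV[R]_n) V : horiz Gam x p V <-> V.2 = Hm Gam x p V.1.
Proof.
have key : forall X : 'rV[R]_n, forall j,
   \sum_k p 0 k * \sum_i X 0 i * Gam x k i j = \sum_i X 0 i * Gp Gam x p i j.
  move=> X j; rewrite /Gp.
  under eq_bigr do rewrite big_distrr.
  rewrite exchange_big; apply: eq_bigr => i _; rewrite big_distrr.
  by apply: eq_bigr => k _ /=; rewrite mulrCA mulrA.
split.
- case=> s [ds [sx [cs ->]]]; apply/rowP => j.
  have := congr1 (fun M : 'rV[R]_n => M 0 j) cs.
  rewrite !mxE => /eqP; rewrite subr_eq0 => /eqP ->.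
  by rewrite sx key.
- move=> HV.
  pose g i : 'rV[R]_n := \row_j Gp Gam x p i j.
  pose s := fun y : 'rV[R]_n => p + \sum_i (y 0 i - x 0 i) *: g i.
  have sx : s x = p.
    by rewrite /s big1 ?addr0 // => i _; rewrite subrr scale0r.
  have [Ds _] : derive s x V.1 = Hm Gam x p V.1 /\ derivable s x V.1.
    apply: derive_ncst => h h0; rewrite sx /s addrAC subrr add0r.
    apply/rowP => j; rewrite !mxE summxE.
    rewrite big_distrr; apply: eq_bigr => i _ /=.
    rewrite /g !mxE addrK; by field.
  exists s; split.
    apply: differentiableD; first exact: differentiable_cst.
    have -> : (fun y : 'rV[R]_n => \sum_i (y 0 i - x 0 i) *: g i) =
       \sum_i (fun y : 'rV[R]_n => (y 0 i - x 0 i) *: g i) by rewrite fct_sumE.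
    apply: differentiable_sum => i; apply: differentiableZl.
    apply: differentiableB; last exact: differentiable_cst.
    exact: differentiable_coord.
  split => //; split; last by rewrite Ds.
  apply/rowP => j; rewrite !mxE Ds sx mxE key subrr //.
Qed.


Lemma dirder_theta n (A : 'rV[R]_n -> 'M[R]_n) (x p : 'rV[R]_n) V W :
  (forall k i, differentiable (fun y => A y k i) x) ->
  dirder (fun y q => evform (fun y q => (q *m A y, 0)) y q W) x p V =
  \sum_i \sum_k (V.2 0 k * A x k i + p 0 k * derive (fun y => A y k i) x V.1) * W.1 0 i.
Proof.
move=> dA; rewrite /dirder /evform /=.
pose F i k := fun t : R => (p 0 k + t * V.2 0 k) * A (x + t *: V.1) k i * W.1 0 i.
have -> : (fun t : R => \sum_i ((p + t *: V.2) *m A (x + t *: V.1)) 0 i * W.1 0 i +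
     \sum_i (0 : 'rV[R]_n) 0 i * W.2 0 i) = \sum_i \sum_k F i k.
  rewrite funeqE => t; rewrite fct_sumE [X in _ + X]big1 ?addr0; last by move=> i _; rewrite mxE mul0r.
  apply: eq_bigr => i _; rewrite fct_sumE mxE mulr_suml; apply: eq_bigr => k _.
  by rewrite /F !mxE.
have dF : forall i k, derive (F i k) 0 1 =
    (V.2 0 k * A x k i + p 0 k * derive (fun y => A y k i) x V.1) * W.1 0 i /\
    derivable (F i k) 0 1.
  move=> i k.
  have [e1 e2] := line_derive _ _ (fun y => A y k i) x V.1.
  have dg := e2 (@diff_derivable _ _ _ _ _ V.1 (dA k i)).
  have [-> d2] := prod_derive _ (p 0 k) (V.2 0 k) (W.1 0 i) dg.
  by rewrite e1 scale0r addr0; split.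
rewrite derive_sum; last first.
  by move=> i; apply: derivable_sum => k; exact: (dF i k).2.
apply: eq_bigr => i _; rewrite derive_sum; last by move=> k; exact: (dF i k).2.
by apply: eq_bigr => k _; rewrite (dF i k).1.
Qed.


Lemma dirder_liou n (x p : 'rV[R]_n) V W :
  dirder (fun y q => evform (@liouville R n) y q W) x p V = \sum_i V.2 0 i * W.1 0 i.
Proof.
have -> : (fun y q => evform (@liouville R n) y q W) =
  (fun y q => evform (fun y q => (q *m (fun _ : 'rV[R]_n => (1%:M : 'M[R]_n)) y, 0)) y q W).
  by rewrite funeqE => y; rewrite funeqE => q; rewrite /evform /liouville /= mulmx1.
rewrite dirder_theta; last by move=> k i; exact: differentiable_cst.
apply: eq_bigr => i _.
rewrite (bigD1 i) //= big1 ?addr0; last first.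
  move=> k /negbTE ki; rewrite derive_cst mxE ki mulr0 mulr0 add0r mul0r //.
by rewrite derive_cst mxE eqxx mulr1 mulr0 addr0.
Qed.

Lemma sum_ev_r {n} (F : 'I_n -> R) a : \sum_i F i * ev R a 0 i = F a.
Proof.
rewrite (bigD1 a) //= big1 ?addr0; first by rewrite mxE eqxx mulr1.
by move=> i ia; rewrite mxE eq_sym (negbTE ia) mulr0.
Qed.

Lemma sum_ev_l {n} (F : 'I_n -> R) a : \sum_i ev R a 0 i * F i = F a.
Proof. by rewrite -(sum_ev_r F a); apply: eq_bigr => i _; rewrite mulrC. Qed.

Lemma dd2 {n} (G : 'I_n -> 'I_n -> R) (Y : 'I_n -> R) a :
  \sum_i \sum_j G i j * ev R a 0 i * Y j = \sum_j G a j * Y j.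
Proof.
rewrite -(sum_ev_r (fun i => \sum_j G i j * Y j) a) /=.
apply: eq_bigr => i _; rewrite mulr_suml; apply: eq_bigr => j _; ring.
Qed.

Lemma Jv_ev {n} (A : 'M[R]_n) b j : Jv A (ev R b) 0 j = A j b.
Proof. by rewrite mxE sum_ev_r. Qed.


Lemma nablaJ_E {n} Gam (J : 'rV[R]_n -> 'M[R]_n) x X Y k :
  (forall k l, differentiable (fun y => J y k l) x) ->
  nablaJ Gam J x X Y 0 k = \sum_l derive (fun y => J y k l) x X * Y 0 l
   + \sum_i \sum_j Gam x k i j * X 0 i * Jv (J x) Y 0 j
   - \sum_m J x k m * (\sum_i \sum_j Gam x m i j * X 0 i * Y 0 j).
Proof.
move=> dJ; rewrite /nablaJ /covvec !mxE Jv_derive // mxE.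
congr (_ - _).
by apply: eq_bigr => m _; rewrite !mxE dcst mxE add0r.
Qed.

Lemma torsion_E {n} Gam (x X Y : 'rV[R]_n) k :
  torsion Gam x X Y 0 k = \sum_i \sum_j Gam x k i j * X 0 i * Y 0 j
     - \sum_i \sum_j Gam x k i j * Y 0 i * X 0 j.
Proof.
by rewrite /torsion /covvec /lieb !mxE !dcst !mxE subrr !add0r subr0.
Qed.



Lemma sum_Jv_ev {n} (F : 'I_n -> R) (A : 'M[R]_n) b :
  \sum_j F j * Jv A (ev R b) 0 j = \sum_j F j * A j b.
Proof. by apply: eq_bigr => j _; rewrite Jv_ev. Qed.

Lemma dd2r {n} (G : 'I_n -> 'I_n -> R) (Y : 'I_n -> R) b :
  \sum_i \sum_j G i j * Y i * ev R b 0 j = \sum_i G i b * Y i.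
Proof. by apply: eq_bigr => i _; rewrite (sum_ev_r (fun j => G i j * Y i)). Qed.

Lemma sum_covvec {n} Gam (F : 'I_n -> R) (x : 'rV[R]_n) a b :
  \sum_m F m * covvec Gam (fun=> ev R b) x (ev R a) 0 m = \sum_m F m * Gam x m a b.
Proof.
apply: eq_bigr => m _; rewrite mxE dcst mxE add0r dd2.
by rewrite (sum_ev_r (fun j => Gam x m a j)).
Qed.

Lemma sum_torsion {n} Gam (F : 'I_n -> R) (x : 'rV[R]_n) a b :
  \sum_m F m * torsion Gam x (ev R a) (ev R b) 0 m =
  \sum_m F m * (Gam x m a b - Gam x m b a).
Proof.
apply: eq_bigr => m _; rewrite torsion_E !dd2.
by rewrite (sum_ev_r (fun j => Gam x m a j)) (sum_ev_r (fun j => Gam x m b j)).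
Qed.

Lemma Stens_E {n} Gam (J : 'rV[R]_n -> 'M[R]_n) x a b k :
  (forall k l, differentiable (fun y => J y k l) x) ->
  Stens Gam J x (ev R a) (ev R b) 0 k =
  derive (fun y => J y k a) x (ev R b) - derive (fun y => J y k b) x (ev R a)
  + (\sum_i Gam x k i b * J x i a - \sum_j Gam x k a j * J x j b).
Proof.
move=> dJ; rewrite /Stens !mxE !Jv_derive // !dcst !mxE !sum_ev_r !dd2 !derive_cst !dd2r !sum_Jv_ev !sum_covvec !sum_torsion.
have -> : \sum_m J x k m * (Gam x m a b - Gam x m b a) =
  \sum_m J x k m * Gam x m a b - \sum_m J x k m * Gam x m b a.
  by rewrite -sumrB; apply: eq_bigr => m _; rewrite mulrBr.
ring.
Qed.


Lemma alg1 {n} Gam (x p : 'rV[R]_n) (A : 'M[R]_n) (h1 c : 'rV[R]_n) i :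
  (Hm Gam x p (Jv A h1) + c *m A) 0 i =
  \sum_j (\sum_l (Gp Gam x p l i * A l j - Gp Gam x p j l * A l i)) * h1 0 j
  + \sum_j A j i * (Hm Gam x p h1 0 j + c 0 j).
Proof.
have T1 : \sum_m Jv A h1 0 m * Gp Gam x p m i =
          \sum_j (\sum_l Gp Gam x p l i * A l j) * h1 0 j.
  rewrite /Jv; under eq_bigr do rewrite mxE mulr_suml.
  under [RHS]eq_bigr do rewrite mulr_suml.
  rewrite exchange_big; apply: eq_bigr => m _; apply: eq_bigr => j _ /=; ring.
have T2 : \sum_j A j i * Hm Gam x p h1 0 j =
          \sum_j (\sum_l Gp Gam x p j l * A l i) * h1 0 j.
  rewrite /Hm; under eq_bigr do rewrite mxE big_distrr.
  under [RHS]eq_bigr do rewrite mulr_suml.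
  rewrite exchange_big; apply: eq_bigr => m _; apply: eq_bigr => j _ /=; ring.
have T3 : \sum_j (\sum_l (Gp Gam x p l i * A l j - Gp Gam x p j l * A l i)) * h1 0 j
  = \sum_j (\sum_l Gp Gam x p l i * A l j) * h1 0 j
    - \sum_j (\sum_l Gp Gam x p j l * A l i) * h1 0 j.
  by rewrite -sumrB; apply: eq_bigr => j _; rewrite sumrB mulrBl.
have T4 : \sum_j A j i * (Hm Gam x p h1 0 j + c 0 j) =
   \sum_j A j i * Hm Gam x p h1 0 j + \sum_j c 0 j * A j i.
  by rewrite -big_split; apply: eq_bigr => j _ /=; rewrite mulrDr [c 0 j * _]mulrC.
rewrite T3 T4 -T1 -T2 !mxE.
ring.
Qed.

Lemma JG_relP {n} Gam (J : 'rV[R]_n -> 'M[R]_n) x p V W :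
  JG_rel Gam J x p V W <-> W = JG_matrix Gam J x p V.
Proof.
split.
- case=> h [c [hh [-> [h' [hh' [h'1 ->]]]]]].
  move/horizP: hh => e; move/horizP: hh' => e'.
  rewrite /JG_matrix /= e' h'1 e; congr pair.
  by apply/rowP => i; rewrite alg1 mxE; congr (_ + _); apply: eq_bigr => j _; rewrite [(_ + c) 0 j]mxE.
- move=> ->.
  exists (V.1, Hm Gam x p V.1), (V.2 - Hm Gam x p V.1); split; first by apply/horizP.
  split; first by case: V => v1 v2 /=; rewrite addrCA subrr addr0.
  exists (Jv (J x) V.1, Hm Gam x p (Jv (J x) V.1)); split; first by apply/horizP.
  split => //; rewrite /JG_matrix /=; congr pair.
  apply/rowP => i; rewrite alg1 mxE; congr (_ + _); apply: eq_bigr => j _.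
  by rewrite [(V.2 - _) 0 j]mxE [(- Hm _ _ _ _) 0 j]mxE addrCA subrr addr0.
Qed.


Lemma Jc1 {n} (J : 'rV[R]_n -> 'M[R]_n) x p Jc V :
  (forall k l, differentiable (fun y => J y k l) x) ->
  is_complete_lift J x p Jc -> (Jc V).1 = Jv (J x) V.1.
Proof.
move=> dJ HJc; apply/rowP => k0.
have := HJc V (0, ev R k0).
rewrite /dform /thetaJ dirder_theta // dirder_theta // !dirder_liou /=.
rewrite big1; last by move=> i _; apply: big1 => k _; rewrite mxE mulr0.
rewrite [X in _ = X - _]big1; last by move=> i _; rewrite mxE mulr0.
rewrite sum_ev_l.
have -> : \sum_i \sum_k (ev R k0 0 k * J x k i + p 0 k * derive (fun y => J y k i) x 0) * V.1 0 i
   = \sum_i J x k0 i * V.1 0 i.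
  apply: eq_bigr => i _; rewrite -mulr_suml; congr (_ * _).
  under eq_bigr do rewrite derive0 mulr0 addr0.
  by rewrite sum_ev_l.
by move/eqP; rewrite !sub0r eqr_opp mxE => /eqP ->.
Qed.


Lemma Jc2 {n} (J : 'rV[R]_n -> 'M[R]_n) x p Jc V j :
  (forall k l, differentiable (fun y => J y k l) x) ->
  is_complete_lift J x p Jc ->
  (Jc V).2 0 j = \sum_k V.2 0 k * J x k j
     + \sum_k p 0 k * derive (fun y => J y k j) x V.1
     - \sum_i \sum_k p 0 k * derive (fun y => J y k i) x (ev R j) * V.1 0 i.
Proof.
move=> dJ HJc.
have := HJc V (ev R j, 0).
rewrite /dform /thetaJ dirder_theta // dirder_theta // !dirder_liou /=.
rewrite [X in _ = _ - X]big1; last by move=> i _; rewrite mxE mul0r.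
rewrite subr0 sum_ev_r.
have -> : \sum_i \sum_k (V.2 0 k * J x k i + p 0 k * derive (fun y => J y k i) x V.1) * ev R j 0 i
   = \sum_k V.2 0 k * J x k j + \sum_k p 0 k * derive (fun y => J y k j) x V.1.
  rewrite -big_split /=.
  under eq_bigr do rewrite -mulr_suml.
  by rewrite (sum_ev_r (fun i => \sum_k (V.2 0 k * J x k i + p 0 k * derive (fun y => J y k i) x V.1))).
have -> : \sum_i \sum_k ((0 : 'rV[R]_n) 0 k * J x k i + p 0 k * derive (fun y => J y k i) x (ev R j)) * V.1 0 i
   = \sum_i \sum_k p 0 k * derive (fun y => J y k i) x (ev R j) * V.1 0 i.
  apply: eq_bigr => i _; apply: eq_bigr => k _; by rewrite mxE mul0r add0r.
by move=> ->.
Qed.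


Lemma Lhelp {n} Gam (J : 'rV[R]_n -> 'M[R]_n) (x p : 'rV[R]_n) i j :
  \sum_l (Gp Gam x p l j * J x l i - Gp Gam x p i l * J x l j) =
  \sum_k p 0 k * (\sum_l Gam x k l j * J x l i - \sum_l Gam x k i l * J x l j).
Proof.
rewrite /Gp; under eq_bigr do rewrite !mulr_suml -sumrB.
rewrite exchange_big; apply: eq_bigr => k _ /=.
rewrite -sumrB big_distrr; apply: eq_bigr => l _ /=; ring.
Qed.

Lemma part2 {n} Gam (J : 'rV[R]_n -> 'M[R]_n) x p Jc V :
  (forall k l, differentiable (fun y => J y k l) x) ->
  is_complete_lift J x p Jc ->
  Jc V + gammaS Gam J x p V = JG_matrix Gam J x p V.
Proof.
move=> dJ HJc.
have e1 : (Jc V + gammaS Gam J x p V).1 = (JG_matrix Gam J x p V).1.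
  by rewrite /= (Jc1 _ _ _ _ V dJ HJc) addr0.
have e2 : (Jc V + gammaS Gam J x p V).2 = (JG_matrix Gam J x p V).2.
  apply/rowP => j; rewrite /= !mxE (Jc2 _ _ _ _ V j dJ HJc).
  set D := fun k i (v : 'rV[R]_n) => derive (fun y => J y k i) x v.
  have G1 : \sum_i \sum_k p 0 k * Stens Gam J x (ev R i) (ev R j) 0 k * V.1 0 i =
     \sum_i (\sum_k p 0 k * (D k i (ev R j) - D k j (ev R i))) * V.1 0 i +
     \sum_i (\sum_l (Gp Gam x p l j * J x l i - Gp Gam x p i l * J x l j)) * V.1 0 i.
    rewrite -big_split; apply: eq_bigr => i _ /=; rewrite -mulr_suml -mulrDl.
    congr (_ * _); rewrite Lhelp -big_split; apply: eq_bigr => k _ /=.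
    by rewrite Stens_E // mulrDr.
  have G2 : \sum_i (\sum_k p 0 k * (D k i (ev R j) - D k j (ev R i))) * V.1 0 i =
     \sum_i \sum_k p 0 k * D k i (ev R j) * V.1 0 i - \sum_k p 0 k * D k j V.1.
    have -> : \sum_k p 0 k * D k j V.1 = \sum_i \sum_k p 0 k * D k j (ev R i) * V.1 0 i.
      rewrite exchange_big; apply: eq_bigr => k _ /=.
      rewrite /D (derive_lin _ _ _ _ (dJ k j)) big_distrr; apply: eq_bigr => i _ /=; ring.
    rewrite -sumrB; apply: eq_bigr => i _; rewrite mulr_suml -sumrB.
    apply: eq_bigr => k _; ring.
  rewrite G1 G2 /D.
  have -> : \sum_k V.2 0 k * J x k j = \sum_k J x k j * V.2 0 k.
    by apply: eq_bigr => k _; rewrite mulrC.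
  ring.
move: e1 e2; case: (Jc V + gammaS Gam J x p V) => a b.
by case: (JG_matrix Gam J x p V) => c d /= -> ->.
Qed.

End Aux.

Theorem proposition2p6 (R : realType) (n : nat) (U : set 'rV[R]_n)
  (J : 'rV[R]_n -> 'M[R]_n) (Gam : 'rV[R]_n -> 'I_n -> 'I_n -> 'I_n -> R) :
  open U ->
  (forall x, U x -> J x *m J x = - 1%:M) ->
  (forall x, U x -> forall k l : 'I_n, differentiable (fun y => J y k l) x) ->
  (forall x p : 'rV[R]_n, U x -> forall V W : 'rV[R]_n * 'rV[R]_n,
      JG_rel Gam J x p V W <-> W = JG_matrix Gam J x p V)
  /\
  (forall x p : 'rV[R]_n, U x ->
    forall Jc : 'rV[R]_n * 'rV[R]_n -> 'rV[R]_n * 'rV[R]_n,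
      is_complete_lift J x p Jc ->
      forall V W : 'rV[R]_n * 'rV[R]_n,
        JG_rel Gam J x p V W <-> W = Jc V + gammaS Gam J x p V).
Proof.
move=> _ _ dJ; split.
  by move=> x p Ux V W; exact: JG_relP.
move=> x p Ux Jc HJc V W.
rewrite (part2 _ _ _ _ _ _ _ (dJ x Ux) HJc).
exact: JG_relP.
Qed.
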